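(* Let $n\ge1$, let $\lambda=(\lambda_1,\dots,\lambda_l)$ and $\mu=(\mu_1,\dots,\mu_m)$ be decompositions of $n+1$ with $1<\mu_m\le\lambda_l$, and let $\mu'=(\mu_1,\dots,\mu_{m-1},\mu_m-1,1)$. Let $G=\langle A_{2,n}(S_{\lambda|\mu})\rangle$ and let $H$ be the subgroup of $G$ generated by $S_{\lambda|\mu'}$ (note $S_{\lambda|\mu'}\subseteq S_{\lambda|\mu}$). Then the set of right cosets of $H$ in $G$ is $$\{H\}\cup\{H\,y_nx_n^{\varepsilon_n}y_{n-1}x_{n-1}^{\varepsilon_{n-1}}\cdots y_kx_k^{\varepsilon_k}\ :\ n-\mu_m+2\le k\le n,\ \varepsilon_j\in\{0,1\}\}.$$
   Context: A decomposition of $N$ is a finite sequence of positive integers with sum $N$. The stopover set of $\lambda=(\lambda_1,\dots,\lambda_l)$ is $\overline{s}(\lambda)=\{\lambda_1,\lambda_1+\lambda_2,\dots,\lambda_1+\dots+\lambda_{l-1}\}$, and $S_{\lambda|\mu}=\{x_i : 1\le i\le n,\ i\notin\overline{s}(\lambda)\}\cup\{y_j: 1\le j\le n,\ j\notin\overline{s}(\mu)\}$. The group $\langle A_{2,n}\rangle$ has generators $X=\{x_1,\dots,x_n,y_1,\dots,y_n\}$ and relations: $z^2=e$ ($z\in X$); $(x_ix_{i+1})^4=(y_iy_{i+1})^4=e$ ($1\le i\le n-1$); $(x_iy_i)^3=e$ ($1\le i\le n$); $(zt)^2=e$ for every other pair of distinct $z,t\in X$; $(x_ix_{i+1}y_i)^3=(x_ix_{i+1}y_{i+1})^3=(x_iy_iy_{i+1})^3=(x_{i+1}y_iy_{i+1})^3=e$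 ($1\le i\le n-1$); $(x_ix_{i+1}x_{i+2})^4=(y_iy_{i+1}y_{i+2})^4=e$ ($1\le i\le n-2$). For $S\subseteq X$, $\langle A_{2,n}(S)\rangle$ is the group generated by $S$ subject to exactly those relations above involving only elements of $S$. *)

(* Defs.v *)
From mathcomp Require Import all_boot.
Set Implicit Arguments. Unset Strict Implicit. Unset Printing Implicit Defensive.

(* Generators x_i (gx i) and y_i (gy i); only indices 1..n are meaningful. *)
Inductive gen := gx of nat | gy of nat.

Definition gidx (g : gen) : nat := match g with gx i => i | gy i => i end.
Definition validg (n : nat) (g : gen) : bool := (1 <= gidx g) && (gidx g <= n).

(* the pairs with a non-(zt)^2 pairwise relation: {x_i,x_{i+1}}, {y_i,y_{i+1}}, {x_i,y_i} *)
Definition special (z t : gen) : bool :=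
  match z, t with
  | gx i, gx j => (j == i.+1) || (i == j.+1)
  | gy i, gy j => (j == i.+1) || (i == j.+1)
  | gx i, gy j => i == j
  | gy i, gx j => i == j
  end.

Definition pw (r : seq gen) (k : nat) : seq gen := flatten (nseq k r).

Inductive relator (n : nat) : seq gen -> Prop :=
| R_sq z : validg n z -> relator n [:: z; z]
| R_xx i : 1 <= i -> i < n -> relator n (pw [:: gx i; gx i.+1] 4)
| R_yy i : 1 <= i -> i < n -> relator n (pw [:: gy i; gy i.+1] 4)
| R_xy i : 1 <= i -> i <= n -> relator n (pw [:: gx i; gy i] 3)
| R_other z t : validg n z -> validg n t -> z <> t -> ~~ special z t ->
    relator n (pw [:: z; t] 2)
| R_t1 i : 1 <= i -> i < n -> relator n (pw [:: gx i; gx i.+1; gy i] 3)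
| R_t2 i : 1 <= i -> i < n -> relator n (pw [:: gx i; gx i.+1; gy i.+1] 3)
| R_t3 i : 1 <= i -> i < n -> relator n (pw [:: gx i; gy i; gy i.+1] 3)
| R_t4 i : 1 <= i -> i < n -> relator n (pw [:: gx i.+1; gy i; gy i.+1] 3)
| R_x3 i : 1 <= i -> i.+2 <= n -> relator n (pw [:: gx i; gx i.+1; gx i.+2] 4)
| R_y3 i : 1 <= i -> i.+2 <= n -> relator n (pw [:: gy i; gy i.+1; gy i.+2] 4).

(* Words in the free group: letters (true, z) = z, (false, z) = z^-1. *)
Definition letter := (bool * gen)%type.
Definition word := seq letter.
Definition winv (w : word) : word := rev (map (fun a => (~~ a.1, a.2)) w).
Definition pos (r : seq gen) : word := map (pair true) r.
Definition onS (S : pred gen) (w : word) : bool := all (fun a => S a.2) w.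

(* Equality in the presented group <A_{2,n}(S)>: the congruence on words over S
   generated by free cancellation and the relators involving only elements of S. *)
Inductive weq (n : nat) (S : pred gen) : word -> word -> Prop :=
| weq_refl w : onS S w -> weq n S w w
| weq_sym u v : weq n S u v -> weq n S v u
| weq_trans u v w : weq n S u v -> weq n S v w -> weq n S u w
| weq_cat u1 v1 u2 v2 : weq n S u1 v1 -> weq n S u2 v2 ->
    weq n S (u1 ++ u2) (v1 ++ v2)
| weq_cancel b z : S z -> weq n S [:: (b, z); (~~ b, z)] [::]
| weq_rel r : relator n r -> all S r -> weq n S (pos r) [::].

Definition inH (n : nat) (S S' : pred gen) (w : word) : Prop :=
  exists u : word, onS S' u /\ weq n S u w.

Definition decomposition (N : nat) (s : seq nat) : bool :=
  all (fun a => 0 < a) s && (sumn s == N).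

Definition stops (s : seq nat) : seq nat :=
  [seq sumn (take k s) | k <- iota 1 (size s).-1].

Definition Sset (n : nat) (lam mu : seq nat) : pred gen :=
  fun g => match g with
           | gx i => (1 <= i) && (i <= n) && (i \notin stops lam)
           | gy j => (1 <= j) && (j <= n) && (j \notin stops mu)
           end.

Definition mu_prime (mu : seq nat) : seq nat :=
  take (size mu).-1 mu ++ [:: (last 0 mu).-1; 1].

Definition rep (n k : nat) (eps : nat -> bool) : seq gen :=
  flatten [seq gy j :: (if eps j then [:: gx j] else [::])
          | j <- rev (iota k (n.+1 - k))].

(* Main.v *)
Require Import Defs.
From mathcomp Require Import all_boot zify.
From Stdlib Require Import Setoid Morphisms.
Set Implicit Arguments. Unset Strict Implicit. Unset Printing Implicit Defensive.

Section Grp.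
Variable n : nat.
Variable S : pred gen.
Hypothesis HSv : forall z, S z -> validg n z.

Definition eqv (u v : seq gen) := weq n S (pos u) (pos v).

Lemma onS_cat u v : onS S (u ++ v) = onS S u && onS S v.
Proof. by rewrite /onS all_cat. Qed.

Lemma onS_pos u : onS S (pos u) = all S u.
Proof. by rewrite /onS /pos all_map. Qed.

Lemma weq_onS u v : weq n S u v -> onS S u /\ onS S v.
Proof.
elim=> {u v} //=.
- by move=> u v _ [].
- by move=> u v w _ [? _] _ [_ ?].
- by move=> u1 v1 u2 v2 _ [h1 h2] _ [h3 h4]; rewrite !onS_cat h1 h2 h3 h4.
- by move=> b z Sz; rewrite /onS /= Sz.
- by move=> r _ Sr; rewrite onS_pos Sr.
Qed.

Lemma eqv_allS u v : eqv u v -> all S u /\ all S v.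
Proof. by move/weq_onS; rewrite !onS_pos. Qed.

Lemma eqv_refl u : all S u -> eqv u u.
Proof. by move=> h; apply: weq_refl; rewrite onS_pos. Qed.

Lemma eqv_sym u v : eqv u v -> eqv v u.
Proof. exact: weq_sym. Qed.

Lemma eqv_trans v u w : eqv u v -> eqv v w -> eqv u w.
Proof. exact: weq_trans. Qed.
Arguments eqv_trans v {u w}.

Lemma eqv_cat u1 v1 u2 v2 : eqv u1 v1 -> eqv u2 v2 -> eqv (u1 ++ u2) (v1 ++ v2).
Proof. by rewrite /eqv /pos !map_cat; apply: weq_cat. Qed.

Lemma eqv_ctx x s t y : eqv s t -> all S x -> all S y -> eqv (x ++ s ++ y) (x ++ t ++ y).
Proof. by move=> h hx hy; apply: eqv_cat; [apply: eqv_refl|apply: eqv_cat=> //; apply: eqv_refl]. Qed.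

Lemma eqv_rel r : relator n r -> all S r -> eqv r [::].
Proof. move=> h1 h2; exact: weq_rel. Qed.

Lemma eqv_zz z : S z -> eqv [:: z; z] [::].
Proof. by move=> h; apply: eqv_rel; [apply: R_sq; apply: HSv| rewrite /= h]. Qed.

Lemma eqv_inv t : all S t -> eqv (t ++ rev t) [::].
Proof.
elim: t => [|z t IH] /=; first by move=> _; apply: eqv_refl.
case/andP=> Sz St; rewrite rev_cons -cats1.
have -> : z :: t ++ rev t ++ [:: z] = [:: z] ++ (t ++ rev t) ++ [:: z] by rewrite catA.
apply: (eqv_trans ([:: z] ++ [::] ++ [:: z])); first by apply: eqv_ctx; [exact: IH | rewrite /= Sz | rewrite /= Sz].
exact: eqv_zz.
Qed.

Lemma eqv_cancel_r u v : eqv u v -> eqv (u ++ rev v) [::].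
Proof.
move=> h; have [Su Sv] := eqv_allS h.
apply: (eqv_trans (v ++ rev v)); last exact: eqv_inv.
apply: eqv_cat=> //; apply: eqv_refl; by rewrite all_rev.
Qed.

Lemma eqv_split s t : eqv (s ++ t) [::] -> eqv s (rev t).
Proof.
move=> h; have [Sst _] := eqv_allS h; move: Sst; rewrite all_cat => /andP[Ss St].
apply: (eqv_trans ((s ++ t) ++ rev t)).
  rewrite -catA -{1}(cats0 s); apply: eqv_cat; first exact: eqv_refl.
  apply: eqv_sym; exact: eqv_inv.
rewrite -{2}(cat0s (rev t)); apply: eqv_cat=> //; apply: eqv_refl; by rewrite all_rev.
Qed.

Lemma eqv_rotate s t : eqv (s ++ t) [::] -> eqv (t ++ s) [::].
Proof.
move=> h; have [Sst _] := eqv_allS h; move: Sst; rewrite all_cat => /andP[Ss St].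
apply: (eqv_trans (t ++ (s ++ t) ++ rev t)).
  have -> : t ++ (s ++ t) ++ rev t = (t ++ s) ++ (t ++ rev t) by rewrite !catA.
  rewrite -{1}(cats0 (t ++ s)); apply: eqv_cat.
    apply: eqv_refl; by rewrite all_cat St Ss.
  apply: eqv_sym; exact: eqv_inv.
apply: (eqv_trans (t ++ [::] ++ rev t)); last by rewrite cat0s; exact: eqv_inv.
by apply: eqv_ctx=> //; rewrite all_rev.
Qed.

Lemma eqv_rev w : eqv w [::] -> eqv (rev w) [::].
Proof.
move=> h; have [Sw _] := eqv_allS h.
apply: (eqv_trans (rev w ++ w)).
  rewrite -{1}(cats0 (rev w)); apply: eqv_cat; [apply: eqv_refl; by rewrite all_rev | exact: eqv_sym].
have := eqv_inv (t := rev w); rewrite revK; apply; by rewrite all_rev.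
Qed.

Lemma eqv_rot k w : eqv w [::] -> eqv (rot k w) [::].
Proof. move=> h; rewrite /rot; apply: eqv_rotate; by rewrite cat_take_drop. Qed.

Lemma rstep R (HR : eqv R [::]) (rv : bool) (k m : nat) x y :
  all S x -> all S y ->
  eqv (x ++ take m (rot k (if rv then rev R else R)) ++ y)
      (x ++ rev (drop m (rot k (if rv then rev R else R))) ++ y).
Proof.
move=> hx hy; apply: eqv_ctx => //; apply: eqv_split; rewrite cat_take_drop.
apply: eqv_rot; case: rv => //; exact: eqv_rev.
Qed.
Arguments rstep [R] HR rv k m x y.

Lemma eqv_comm z t : S z -> S t -> z <> t -> ~~ special z t -> eqv [:: z; t] [:: t; z].
Proof.
move=> hz ht ne sp; have : eqv ([:: z; t] ++ [:: z; t]) [::].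
  apply: eqv_rel; [apply: R_other => //; exact: HSv | by rewrite /= hz ht].
by move/eqv_split.
Qed.

Lemma eqv_braid b : 1 <= b <= n -> S (gx b) -> S (gy b) ->
  eqv [:: gy b; gx b; gy b] [:: gx b; gy b; gx b].
Proof.
case/andP=> h1 h2 hx hy; have : eqv ([:: gy b; gx b; gy b] ++ [:: gx b; gy b; gx b]) [::].
  rewrite -[_ ++ _]/(rot 1 (pw [:: gx b; gy b] 3)); apply: eqv_rot.
  apply: eqv_rel; [exact: R_xy | by rewrite /= hx hy].
by move/eqv_split.
Qed.

Section Loc.
Variable a : nat.
Hypothesis Ha1 : 1 <= a.
Hypothesis Ha2 : a < n.
Hypothesis HX : S (gx a).
Hypothesis HU : S (gx a.+1).
Hypothesis HV : S (gy a.+1).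
Ltac allS := by rewrite /= ?HX ?HU ?HV.

Lemma rel_xx : eqv (pw [:: gx a; gx a.+1] 4) [::].
Proof. apply: eqv_rel; [exact: R_xx | allS]. Qed.
Lemma rel_xyb : eqv (pw [:: gx a.+1; gy a.+1] 3) [::].
Proof. apply: eqv_rel; [apply: R_xy => //| allS]. Qed.
Lemma rel_XV : eqv (pw [:: gx a; gy a.+1] 2) [::].
Proof. apply: eqv_rel; [apply: R_other; [exact: HSv|exact: HSv|by []|by rewrite /= neq_ltn ltnSn] | allS]. Qed.
Lemma rel_t2 : eqv (pw [:: gx a; gx a.+1; gy a.+1] 3) [::].
Proof. apply: eqv_rel; [exact: R_t2 | allS]. Qed.

Lemma LA : eqv [:: gy a.+1; gx a.+1; gx a] [:: gx a; gx a.+1; gx a; gx a.+1; gy a.+1; gx a.+1].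
Proof.
  apply: (eqv_trans [:: gx a; gx a.+1; gy a.+1; gx a; gx a.+1; gy a.+1]); first exact (rstep rel_t2 true 0 3 [::] [::] ltac:(allS) ltac:(allS)).
  apply: (eqv_trans [:: gx a; gx a.+1; gx a; gy a.+1; gx a.+1; gy a.+1]); first exact (rstep rel_XV true 2 2 [:: gx a; gx a.+1] [:: gx a.+1; gy a.+1] ltac:(allS) ltac:(allS)).
  apply: (eqv_trans [:: gx a; gx a.+1; gx a; gx a.+1; gy a.+1; gx a.+1]); first exact (rstep rel_xyb true 0 3 [:: gx a; gx a.+1; gx a] [::] ltac:(allS) ltac:(allS)).
  apply: eqv_refl; allS.
Qed.

Section LocY.
Hypothesis HY : S (gy a).
Ltac allSY := by rewrite /= ?HX ?HY ?HU ?HV.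
Lemma rel_yy : eqv (pw [:: gy a; gy a.+1] 4) [::].
Proof. apply: eqv_rel; [exact: R_yy | allSY]. Qed.
Lemma rel_xya : eqv (pw [:: gx a; gy a] 3) [::].
Proof. apply: eqv_rel; [apply: R_xy => //; exact: ltnW| allSY]. Qed.
Lemma rel_YU : eqv (pw [:: gy a; gx a.+1] 2) [::].
Proof. apply: eqv_rel; [apply: R_other; [exact: HSv|exact: HSv|by []|by rewrite /= neq_ltn ltnSn] | allSY]. Qed.
Lemma rel_t1 : eqv (pw [:: gx a; gx a.+1; gy a] 3) [::].
Proof. apply: eqv_rel; [exact: R_t1 | allSY]. Qed.
Lemma rel_t3 : eqv (pw [:: gx a; gy a; gy a.+1] 3) [::].
Proof. apply: eqv_rel; [exact: R_t3 | allSY]. Qed.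
Lemma rel_t4 : eqv (pw [:: gx a.+1; gy a; gy a.+1] 3) [::].
Proof. apply: eqv_rel; [exact: R_t4 | allSY]. Qed.

Lemma Le0 : eqv [:: gy a.+1; gy a; gx a; gx a.+1] [:: gx a.+1; gx a; gx a.+1; gy a.+1; gy a; gx a].
Proof.
  apply: (eqv_trans [:: gy a.+1; gx a.+1; gx a; gy a; gx a.+1; gx a; gy a]); first exact (rstep rel_t1 false 8 3 [:: gy a.+1] [::] ltac:(allSY) ltac:(allSY)).
  apply: (eqv_trans [:: gy a.+1; gx a.+1; gx a; gx a.+1; gy a; gx a; gy a]); first exact (rstep rel_YU true 1 2 [:: gy a.+1; gx a.+1; gx a] [:: gx a; gy a] ltac:(allSY) ltac:(allSY)).
  apply: (eqv_trans [:: gx a.+1; gy a.+1; gx a.+1; gy a.+1; gx a; gx a.+1; gy a; gx a; gy a]); first exact (rstep rel_xyb true 0 2 [::] [:: gx a; gx a.+1; gy a; gx a; gy a] ltac:(allSY) ltac:(allSY)).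
  apply: (eqv_trans [:: gx a.+1; gy a.+1; gx a.+1; gx a; gy a.+1; gx a.+1; gy a; gx a; gy a]); first exact (rstep rel_XV true 2 2 [:: gx a.+1; gy a.+1; gx a.+1] [:: gx a.+1; gy a; gx a; gy a] ltac:(allSY) ltac:(allSY)).
  apply: (eqv_trans [:: gx a.+1; gx a; gx a.+1; gy a.+1; gx a; gy a; gx a; gy a]); first exact (rstep rel_t2 true 0 5 [:: gx a.+1] [:: gy a; gx a; gy a] ltac:(allSY) ltac:(allSY)).
  apply: (eqv_trans [:: gx a.+1; gx a; gx a.+1; gy a.+1; gy a; gx a]); first exact (rstep rel_xya true 1 4 [:: gx a.+1; gx a; gx a.+1; gy a.+1] [::] ltac:(allSY) ltac:(allSY)).
  apply: eqv_refl; allSY.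
Qed.

Lemma Le1 : eqv [:: gy a.+1; gx a.+1; gy a; gx a; gx a.+1] [:: gx a.+1; gx a; gx a.+1; gy a.+1; gx a.+1; gy a; gx a].
Proof.
  apply: (eqv_trans [:: gy a.+1; gx a; gy a; gx a.+1; gx a; gy a]); first exact (rstep rel_t1 false 1 4 [:: gy a.+1] [::] ltac:(allSY) ltac:(allSY)).
  apply: (eqv_trans [:: gy a.+1; gx a; gx a.+1; gy a; gx a; gy a]); first exact (rstep rel_YU true 1 2 [:: gy a.+1; gx a] [:: gx a; gy a] ltac:(allSY) ltac:(allSY)).
  apply: (eqv_trans [:: gy a.+1; gx a; gx a.+1; gx a; gy a; gx a]); first exact (rstep rel_xya true 2 3 [:: gy a.+1; gx a; gx a.+1] [::] ltac:(allSY) ltac:(allSY)).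
  apply: (eqv_trans [:: gy a.+1; gx a; gx a.+1; gy a.+1; gx a; gy a.+1; gy a; gx a]); first exact (rstep rel_XV true 3 1 [:: gy a.+1; gx a; gx a.+1] [:: gy a; gx a] ltac:(allSY) ltac:(allSY)).
  apply: (eqv_trans [:: gx a.+1; gx a; gy a.+1; gx a.+1; gy a.+1; gy a; gx a]); first exact (rstep rel_t2 false 8 5 [::] [:: gy a.+1; gy a; gx a] ltac:(allSY) ltac:(allSY)).
  apply: (eqv_trans [:: gx a.+1; gx a; gx a.+1; gy a.+1; gx a.+1; gy a; gx a]); first exact (rstep rel_xyb true 0 3 [:: gx a.+1; gx a] [:: gy a; gx a] ltac:(allSY) ltac:(allSY)).
  apply: eqv_refl; allSY.
Qed.

Lemma Lf00 : eqv [:: gy a.+1; gy a; gy a.+1] [:: gx a; gy a; gx a; gy a.+1; gy a; gx a].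
Proof.
  apply: (eqv_trans [:: gx a; gy a.+1; gx a; gy a; gy a.+1]); first exact (rstep rel_XV true 2 1 [::] [:: gy a; gy a.+1] ltac:(allSY) ltac:(allSY)).
  apply: (eqv_trans [:: gx a; gy a; gx a; gy a.+1; gy a; gx a]); first exact (rstep rel_t3 false 2 4 [:: gx a] [::] ltac:(allSY) ltac:(allSY)).
  apply: eqv_refl; allSY.
Qed.

Lemma Lf01 : eqv [:: gy a.+1; gy a; gx a; gy a.+1] [:: gx a; gy a; gx a; gy a.+1; gy a].
Proof.
  apply: (eqv_trans [:: gx a; gy a; gy a.+1; gx a; gy a]); first exact (rstep rel_t3 true 6 4 [::] [::] ltac:(allSY) ltac:(allSY)).
  apply: (eqv_trans [:: gx a; gy a; gx a; gy a.+1; gy a]); first exact (rstep rel_XV true 2 2 [:: gx a; gy a] [:: gy a] ltac:(allSY) ltac:(allSY)).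
  apply: eqv_refl; allSY.
Qed.

Lemma Lf10 : eqv [:: gy a.+1; gx a.+1; gy a; gy a.+1] [:: gy a; gx a.+1; gy a.+1; gx a.+1; gy a].
Proof.
  apply: (eqv_trans [:: gy a; gx a.+1; gy a.+1; gy a; gx a.+1]); first exact (rstep rel_t4 false 2 4 [::] [::] ltac:(allSY) ltac:(allSY)).
  apply: (eqv_trans [:: gy a; gx a.+1; gy a.+1; gx a.+1; gy a]); first exact (rstep rel_YU true 1 2 [:: gy a; gx a.+1; gy a.+1] [::] ltac:(allSY) ltac:(allSY)).
  apply: eqv_refl; allSY.
Qed.

Lemma Lf11 : eqv [:: gy a.+1; gx a.+1; gy a; gx a; gy a.+1] [:: gy a; gx a.+1; gy a.+1; gx a.+1; gy a; gx a].
Proof.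
  apply: (eqv_trans [:: gy a.+1; gx a.+1; gy a; gy a.+1; gx a]); first exact (rstep rel_XV false 2 2 [:: gy a.+1; gx a.+1; gy a] [::] ltac:(allSY) ltac:(allSY)).
  apply: (eqv_trans [:: gy a; gx a.+1; gy a.+1; gy a; gx a.+1; gx a]); first exact (rstep rel_t4 false 2 4 [::] [:: gx a] ltac:(allSY) ltac:(allSY)).
  apply: (eqv_trans [:: gy a; gx a.+1; gy a.+1; gx a.+1; gy a; gx a]); first exact (rstep rel_YU true 1 2 [:: gy a; gx a.+1; gy a.+1] [:: gx a] ltac:(allSY) ltac:(allSY)).
  apply: eqv_refl; allSY.
Qed.


End LocY.
End Loc.
End Grp.

Section E.
Variable n : nat.
Variable S : pred gen.
Hypothesis HSv : forall z, S z -> validg n z.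

Definition E (u v : seq gen) : Prop := all S u = all S v /\ (all S u -> eqv n S u v).

Lemma eqv_E u v : eqv n S u v -> E u v.
Proof. by move=> h; have [h1 h2] := eqv_allS h; rewrite /E h1 h2. Qed.

Lemma E_eqv u v : E u v -> all S u -> eqv n S u v.
Proof. by case. Qed.

Lemma E_refl u : E u u.
Proof. by split=> // h; exact: eqv_refl. Qed.
Lemma E_sym u v : E u v -> E v u.
Proof. by case=> h1 h2; split=> // h; apply: eqv_sym; apply: h2; rewrite h1. Qed.
Lemma E_trans u v w : E u v -> E v w -> E u w.
Proof.
case=> h1 h2 [h3 h4]; split; first by rewrite h1.
move=> h; apply: (eqv_trans (v:=v)); [exact: h2 | apply: h4; by rewrite -h1].
Qed.

Global Instance E_equiv : Equivalence E.
Proof. split; [exact: E_refl | exact: E_sym | exact: E_trans]. Qed.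

Global Instance E_cat : Proper (E ==> E ==> E) (@cat gen).
Proof.
move=> u1 v1 [h1 h2] u2 v2 [h3 h4]; split; first by rewrite !all_cat h1 h3.
rewrite all_cat => /andP[a1 a2]; apply: eqv_cat; [exact: h2| exact: h4].
Qed.

Global Instance E_cons z : Proper (E ==> E) (cons z).
Proof.
move=> u v h; rewrite -(cat1s z u) -(cat1s z v); apply: E_cat => //; exact: E_refl.
Qed.
End E.

Definition stops0 (s0 : seq nat) := [seq sumn (take k s0) | k <- iota 1 (size s0)].

Lemma stops_rcons s0 l : stops (rcons s0 l) = stops0 s0.
Proof.
rewrite /stops /stops0 size_rcons /=; apply/eq_in_map => k; rewrite mem_iota => /andP[_ hk].
by rewrite -cats1 takel_cat //; lia.
Qed.

Lemma stops_mup s0 l : stops (s0 ++ [:: l; 1]) = rcons (stops0 s0) (sumn s0 + l).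
Proof.
rewrite /stops /stops0 size_cat [size [:: _; _]]/=.
have -> : (size s0 + 2).-1 = size s0 + 1 by lia.
rewrite iotaD map_cat cats1 /=.
congr rcons; last first.
  by rewrite take_cat ltnNge leq_addl /= addnK sumn_cat /= addn0.
apply/eq_in_map => k; rewrite mem_iota => /andP[_ hk]; rewrite takel_cat //; lia.
Qed.

Lemma sumn_take_le k s : sumn (take k s) <= sumn s.
Proof. by rewrite -{2}(cat_take_drop k s) sumn_cat leq_addr. Qed.

Lemma stops0_le s0 j : j \in stops0 s0 -> j <= sumn s0.
Proof. by case/mapP=> k _ ->; exact: sumn_take_le. Qed.

Lemma stops0_last s0 : 0 < size s0 -> sumn s0 \in stops0 s0.
Proof.
move=> h; apply/mapP; exists (size s0); last by rewrite take_size.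
rewrite mem_iota; lia.
Qed.

Lemma mu_primeE s0 l : mu_prime (rcons s0 l) = s0 ++ [:: l.-1; 1].
Proof.
by rewrite /mu_prime size_rcons /= -cats1 take_size_cat // last_cat.
Qed.

Definition blk (k : nat) (eps : nat -> bool) : seq gen :=
  gy k :: (if eps k then [:: gx k] else [::]).
Definition seg (i k : nat) (eps : nat -> bool) : seq gen :=
  flatten [seq blk j eps | j <- rev (iota k (i - k))].

Lemma repE n k eps : rep n k eps = seg n.+1 k eps.
Proof. by []. Qed.

Lemma seg_cat i j k eps : k <= j <= i -> seg i k eps = seg i j eps ++ seg j k eps.
Proof.
case/andP=> h1 h2; rewrite /seg -flatten_cat -map_cat -rev_cat.
have -> : i - k = (j - k) + (i - j) by lia.
by rewrite iotaD; congr (flatten (map _ (rev (_ ++ iota _ _)))); lia.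
Qed.

Lemma seg1 i eps : seg i.+1 i eps = blk i eps.
Proof. by rewrite /seg subSn // subnn /= cats0. Qed.

Lemma seg0 i eps : seg i i eps = [::].
Proof. by rewrite /seg subnn. Qed.

Lemma seg_eq i k eps eps' : (forall j, k <= j < i -> eps j = eps' j) -> seg i k eps = seg i k eps'.
Proof.
move=> h; rewrite /seg; congr flatten; apply/eq_in_map => j; rewrite mem_rev mem_iota => hj.
rewrite /blk h //; lia.
Qed.

Lemma all_flatten T (P : pred T) ss : all P (flatten ss) = all (all P) ss.
Proof. by elim: ss => //= s ss IH; rewrite all_cat IH. Qed.

Lemma seg_idx i k eps : all (fun z => k <= gidx z < i) (seg i k eps).
Proof.
rewrite /seg all_flatten all_map; apply/allP => j; rewrite mem_rev mem_iota => hj /=.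
rewrite /blk /=; case: (eps j) => /=; rewrite ?andbT; apply/andP; split; lia.
Qed.

Section Main.
Variables (n : nat) (lam mu : seq nat).
Hypothesis hn : 1 <= n.
Hypothesis hlam : decomposition n.+1 lam.
Hypothesis hmu : decomposition n.+1 mu.
Hypothesis hlast : 1 < last 0 mu.
Hypothesis hll : last 0 mu <= last 0 lam.

Notation S := (Sset n lam mu).
Notation S' := (Sset n lam (mu_prime mu)).
Notation p := (n + 2 - last 0 mu).

Lemma decE N s : decomposition N s -> 0 < N ->
  exists s0 l, s = rcons s0 l /\ sumn s0 + l = N.
Proof.
case/andP=> _ /eqP hs hN; case/lastP: s hs => [|s0 l] hs; first by rewrite -hs in hN.
by exists s0, l; rewrite -sumn_rcons.
Qed.

Lemma HSv : forall z, S z -> validg n z.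
Proof. by case=> j /= /andP[/andP[h1 h2] _]; rewrite /validg /= h1 h2. Qed.

Lemma p_bounds : 1 <= p <= n.
Proof.
have [s0 [l [e h]]] := decE hmu (ltn0Sn n); move: hlast; rewrite e last_rcons => hl; lia.
Qed.

Lemma stops_mu_lt j : j \in stops mu -> j < p.
Proof.
have [s0 [l [e h]]] := decE hmu (ltn0Sn n); move: hlast; rewrite e last_rcons stops_rcons => hl.
move/stops0_le; lia.
Qed.

Lemma stops_lam_lt j : j \in stops lam -> j < p.
Proof.
have [s0 [l [e h]]] := decE hlam (ltn0Sn n); move: hll; rewrite e last_rcons stops_rcons => hl.
move/stops0_le; lia.
Qed.

Lemma S_gx j : p <= j <= n -> S (gx j).
Proof.
move=> h; have hp := p_bounds; rewrite /= ; apply/andP; split; first by apply/andP; split; lia.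
by apply/negP => /stops_lam_lt; lia.
Qed.

Lemma S_gy j : p <= j <= n -> S (gy j).
Proof.
move=> h; have hp := p_bounds; rewrite /= ; apply/andP; split; first by apply/andP; split; lia.
by apply/negP => /stops_mu_lt; lia.
Qed.

Lemma S_gy_low j : S (gy j) -> p <= j.+1 -> p <= j.
Proof.
have [s0 [l [e h]]] := decE hmu (ltn0Sn n).
rewrite /= e stops_rcons last_rcons => /andP[/andP[h1 h2] hs] hp.
move: hlast; rewrite e last_rcons => hl.
case: (ltnP j (n + 2 - l)) => // hjp.
have hj : j = sumn s0 by lia.
case: s0 e h hj hs => [|x s0] e h hj hs; first by move: h1; rewrite hj.
by rewrite hj stops0_last in hs.
Qed.

Definition isyn (n : nat) (z : gen) := if z is gy j then j == n else false.

Lemma S'E z : S' z = S z && ~~ isyn n z.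
Proof.
have [s0 [l [e h]]] := decE hmu (ltn0Sn n).
case: z => j /=; first by rewrite andbT.
rewrite e mu_primeE stops_mup stops_rcons mem_rcons inE.
have -> : sumn s0 + l.-1 = n by move: hlast; rewrite e last_rcons; lia.
case: (j =P n) => [->|hj] /=; first by rewrite !andbF.
by rewrite andbT.
Qed.

Notation EE := (E n S).

Lemma tailE s s' : eqv n S s s' -> forall t, EE (s ++ t) (s' ++ t).
Proof. move=> h t; apply: E_cat; [exact: eqv_E | exact: E_refl]. Qed.

Lemma Ecomm z t tl : S z -> S t -> z <> t -> ~~ special z t -> EE (z :: t :: tl) (t :: z :: tl).
Proof. move=> h1 h2 h3 h4; exact: (tailE (eqv_comm HSv h1 h2 h3 h4) tl). Qed.

Lemma Ezz z tl : S z -> EE (z :: z :: tl) tl.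
Proof. move=> h; exact: (tailE (eqv_zz HSv h) tl). Qed.

Lemma far_ok z t : gidx t + 2 <= gidx z -> z <> t /\ ~~ special z t.
Proof. by case: z => i; case: t => j /= h; split=> //; try (move=> [] e; lia); apply/negP; rewrite ?negb_or; lia. Qed.

Lemma special_sym z t : special z t = special t z.
Proof. by case: z => i; case: t => j /=; rewrite ?(eq_sym i j) // orbC. Qed.

Lemma Ecomm_word z Q tl : S z -> all S Q -> all (fun t => gidx t + 2 <= gidx z) Q ->
  EE (Q ++ z :: tl) (z :: Q ++ tl).
Proof.
move=> Sz; elim: Q => [|t Q IH] /=; first by move=> *; exact: E_refl.
case/andP=> St SQ /andP[ft fQ]; rewrite (IH SQ fQ).
have [ne ns] := far_ok ft.
have ne' : t <> z by move=> e; apply: ne.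
rewrite Ecomm //; last by rewrite special_sym.
exact: E_refl.
Qed.

Lemma Ecomm_xx i j tl : S (gx i) -> S (gx j) -> i.+1 < j \/ j.+1 < i ->
  EE (gx i :: gx j :: tl) (gx j :: gx i :: tl).
Proof.
move=> h1 h2 h; apply: Ecomm => //; first by case; lia.
by rewrite /= !negb_or; apply/andP; split; apply/eqP; lia.
Qed.
Lemma Ecomm_yy i j tl : S (gy i) -> S (gy j) -> i.+1 < j \/ j.+1 < i ->
  EE (gy i :: gy j :: tl) (gy j :: gy i :: tl).
Proof.
move=> h1 h2 h; apply: Ecomm => //; first by case; lia.
by rewrite /= !negb_or; apply/andP; split; apply/eqP; lia.
Qed.
Lemma Ecomm_xy i j tl : S (gx i) -> S (gy j) -> i <> j ->
  EE (gx i :: gy j :: tl) (gy j :: gx i :: tl).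
Proof. by move=> h1 h2 h; apply: Ecomm => //; rewrite /=; apply/eqP. Qed.
Lemma Ecomm_yx i j tl : S (gy i) -> S (gx j) -> i <> j ->
  EE (gy i :: gx j :: tl) (gx j :: gy i :: tl).
Proof. by move=> h1 h2 h; apply: Ecomm => //; rewrite /=; apply/eqP. Qed.

Lemma rep_rec k eps : k <= n -> rep n k eps = rep n k.+1 eps ++ blk k eps.
Proof. by move=> hk; rewrite !repE (seg_cat (j := k.+1)) ?seg1 //; apply/andP; split; lia. Qed.

Lemma rep_top eps : rep n n.+1 eps = [::].
Proof. by rewrite repE seg0. Qed.

Lemma rep_eq k eps eps' : (forall j, k <= j <= n -> eps j = eps' j) -> rep n k eps = rep n k eps'.
Proof. by move=> h; rewrite !repE; apply: seg_eq => j hj; apply: h; lia. Qed.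

Lemma S_idx z : p <= gidx z <= n -> S z.
Proof. by case: z => j /= h; [exact: S_gx | exact: S_gy]. Qed.

Lemma all_S_seg i k eps : p <= k -> i <= n.+1 -> all S (seg i k eps).
Proof.
move=> hk hi; apply: sub_all (seg_idx i k eps) => z hz; apply: S_idx; lia.
Qed.

Lemma all_S_rep k eps : p <= k -> all S (rep n k eps).
Proof. by move=> hk; rewrite repE; apply: all_S_seg. Qed.

Definition low k z := match z with gx j => j < k | gy j => j.+1 < k end.
Definition good k z := S z && ~~ isyn n z && low k z.

Lemma good_S' k h : all (good k) h -> all S' h.
Proof. by elim: h => //= z h IH /andP[/andP[/andP[h1 h2] _] /IH ->]; rewrite S'E h1 h2. Qed.

Lemma move_gen (R : seq gen) (P : pred gen) :
  (forall z, P z -> exists h, all S' h /\ forall tl, EE (R ++ z :: tl) (h ++ R ++ tl)) ->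
  forall h0, all P h0 -> exists h, all S' h /\ forall tl, EE (R ++ h0 ++ tl) (h ++ R ++ tl).
Proof.
move=> H; elim=> [|z h0 IH] /=; first by exists [::]; split=> // tl; exact: E_refl.
case/andP=> Pz /IH [h2 [S2 H2]]; have [h1 [S1 H1]] := H z Pz.
exists (h1 ++ h2); split; first by rewrite all_cat S1 S2.
move=> tl; rewrite H1 H2 catA; exact: E_refl.
Qed.

Lemma blk_step k eps z : p <= k <= n -> good k z ->
  exists h0, all (good k.+1) h0 /\ forall tl, EE (blk k eps ++ z :: tl) (h0 ++ blk k eps ++ tl).
Proof.
move=> hk /andP[/andP[Sz nz] lz].
have Syk : S (gy k) by apply: S_gy.
have Sxk : S (gx k) by apply: S_gx.
have gz : good k.+1 z by rewrite /good Sz nz /=; case: z lz {Sz nz} => j /=; lia.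
case: z Sz nz lz gz => j Sz nz /= lz gz.
-
  case: (ltnP j.+1 k) => hj.
  + exists [:: gx j]; split; first by rewrite /= gz.
    move=> tl; rewrite /blk; case: (eps k) => /=.
    * rewrite (Ecomm_xx (i:=k) (j:=j)) //; last lia.
      rewrite (Ecomm_yx (i:=k) (j:=j)) //; last lia.
      exact: E_refl.
    * rewrite (Ecomm_yx (i:=k) (j:=j)) //; last lia.
      exact: E_refl.
  + have ek : k = j.+1 by lia.
    subst k; rewrite /blk; case: (eps j.+1) => /=.
    * exists [:: gx j; gx j.+1; gx j; gx j.+1]; split.
        have gxj1 : good j.+2 (gx j.+1) by rewrite /good Sxk /=.
        by rewrite /= gz gxj1.
      move=> tl.
      have h1 : 1 <= j by move: Sz => /= /andP[/andP[]].
      have h2 : j.+1 <= n by lia.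
      have /= L := tailE (LA HSv h1 h2 Sz Sxk Syk).
      rewrite L; exact: E_refl.
    * exists [:: gx j]; split; first by rewrite /= gz.
      move=> tl; rewrite (Ecomm_yx (i:=j.+1) (j:=j)) //; last lia.
      exact: E_refl.
-
  exists [:: gy j]; split; first by rewrite /= gz.
  move=> tl; rewrite /blk; case: (eps k) => /=.
  + rewrite (Ecomm_xy (i:=k) (j:=j)) //; last lia.
    rewrite (Ecomm_yy (i:=k) (j:=j)) //; last lia.
    exact: E_refl.
  + rewrite (Ecomm_yy (i:=k) (j:=j)) //; last lia.
    exact: E_refl.
Qed.

Lemma move k eps h0 : p <= k <= n.+1 -> all (good k) h0 ->
  exists h, all S' h /\ forall tl, EE (rep n k eps ++ h0 ++ tl) (h ++ rep n k eps ++ tl).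
Proof.
move e: (n.+1 - k) => d; elim: d k e h0 => [|d IH] k e h0 hk.
  have -> : k = n.+1 by lia.
  rewrite rep_top => gh; exists h0; split; first exact: good_S' gh.
  move=> tl; exact: E_refl.
apply: move_gen => z gz.
have hkn : k <= n by lia.
have hk' : p <= k <= n by lia.
have [h0' [g0 H0]] := blk_step eps hk' gz.
have [h [Sh Hh]] := IH k.+1 ltac:(lia) h0' ltac:(lia) g0.
exists h; split => // tl.
rewrite rep_rec // -catA H0 Hh -!catA; exact: E_refl.
Qed.

Definition crep (c : option (nat * (nat -> bool))) := if c is Some (k, e) then rep n k e else [::].
Definition cok (c : option (nat * (nat -> bool))) := if c is Some (k, _) then p <= k <= n else true.
Definition upd (eps : nat -> bool) t b := fun s => if s == t then b else eps s.
Definition CL w := exists h c, all S' h /\ cok c /\ EE w (h ++ crep c).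

Lemma rep_split3 a k eps : k <= a -> a < n ->
  rep n k eps = rep n a.+2 eps ++ blk a.+1 eps ++ blk a eps ++ seg a k eps.
Proof.
move=> h1 h2; rewrite !repE (seg_cat (j := a.+2)); last by apply/andP; split; lia.
rewrite (seg_cat (i := a.+2) (j := a.+1)) ?seg1; last by apply/andP; split; lia.
rewrite (seg_cat (i := a.+1) (j := a)) ?seg1 //; by apply/andP; split; lia.
Qed.

Lemma rep_upd j eps t b : t < j -> rep n j (upd eps t b) = rep n j eps.
Proof. move=> h; apply: rep_eq => i hi; rewrite /upd; case: eqP => //; lia. Qed.

Lemma seg_upd a k eps t b : a <= t -> seg a k (upd eps t b) = seg a k eps.
Proof. move=> h; apply: seg_eq => i hi; rewrite /upd; case: eqP => //; lia. Qed.

Lemma blk_upd i eps t b : i <> t -> blk i (upd eps t b) = blk i eps.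
Proof. by move=> h; rewrite /blk /upd; case: eqP. Qed.

Lemma blk_upd_eq t eps b : blk t (upd eps t b) = gy t :: (if b then [:: gx t] else [::]).
Proof. by rewrite /blk /upd eqxx. Qed.

Global Instance CL_proper : Proper (EE ==> iff) CL.
Proof.
move=> u v huv; split=> [[h [c [Sh [hc He]]]]|[h [c [Sh [hc He]]]]]; exists h, c; do 2 split=> //.
  by rewrite -huv.
by rewrite huv.
Qed.

Lemma CL_move k eps h0 tl c : p <= k <= n.+1 -> all (good k) h0 -> cok c ->
  EE (rep n k eps ++ tl) (crep c) ->
  CL (rep n k eps ++ h0 ++ tl).
Proof.
move=> hk g0 hc He; have [h [Sh Hh]] := move eps hk g0.
exists h, c; split=> //; split=> //; rewrite Hh He; exact: E_refl.
Qed.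

Lemma CL_nomove w c : cok c -> EE w (crep c) -> CL w.
Proof. by move=> hc He; exists [::], c. Qed.

Lemma locS a : p <= a -> a < n ->
  [/\ S (gx a), S (gy a), S (gx a.+1), S (gy a.+1) & 1 <= a].
Proof.
move=> h1 h2; have hp := p_bounds; split; [apply: S_gx|apply: S_gy|apply: S_gx|apply: S_gy|]; lia.
Qed.

Lemma closure_some k eps z : p <= k <= n -> S z -> CL (rep n k eps ++ [:: z]).
Proof.
move=> hk Sz; have hp := p_bounds.
have hkn : k <= n by lia.
case: z Sz => j Sz.
-
  case: (ltnP j k) => hjk.
    apply: (CL_move (h0 := [:: gx j]) (tl := [::]) (c := Some (k, eps))) => //; first lia.
      by rewrite /= /good Sz /=; lia.
    by rewrite cats0; exact: E_refl.
  have hjn : j <= n by move: Sz => /= /andP[/andP[]].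
  case: (ltngtP j k) => hjk'; first lia; last first.
  +
    subst j; apply: (CL_nomove (c := Some (k, upd eps k (~~ eps k)))) => //=.
    rewrite (rep_rec _ hkn) (rep_rec _ hkn) rep_upd // blk_upd_eq /blk -catA.
    case: (eps k) => /=; last exact: E_refl.
    rewrite Ezz //; exact: E_refl.
  + (* k < j *)
    case: j hjk hjn hjk' Sz => // a hjk hjn hka Sz.
    have ka : k <= a by lia.
    have an : a < n by lia.
    have [Sxa Sya Sxb Syb a1] := locS (a := a) ltac:(lia) an.
    rewrite (rep_split3 _ ka an) -!catA.
    rewrite Ecomm_word //; first last.
      by apply: sub_all (seg_idx a k eps) => t /= ht; lia.
      by apply: all_S_seg; lia.
    rewrite cats0.
    case ea: (eps a); rewrite /blk ?ea /=.
    *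
      case eb: (eps a.+1); rewrite /blk ?eb /=.
      - have /= L := tailE (Le1 HSv a1 an Sxa Sxb Syb Sya); rewrite L.
        apply: (CL_move (k := a.+2) (h0 := [:: gx a.+1; gx a; gx a.+1]) (c := Some (k, eps))) => //.
          lia.
          by rewrite /= /good Sxa Sxb /=; lia.
        rewrite /= (rep_split3 _ ka an) /blk ?ea ?eb -?catA /=; exact: E_refl.
      - have /= L := tailE (Le0 HSv a1 an Sxa Sxb Syb Sya); rewrite L.
        apply: (CL_move (k := a.+2) (h0 := [:: gx a.+1; gx a; gx a.+1]) (c := Some (k, eps))) => //.
          lia.
          by rewrite /= /good Sxa Sxb /=; lia.
        rewrite /= (rep_split3 _ ka an) /blk ?ea ?eb -?catA /=; exact: E_refl.
    *
      apply: (CL_nomove (c := Some (k, upd eps a.+1 (~~ eps a.+1)))) => //=.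
      rewrite (rep_split3 _ ka an) rep_upd // blk_upd_eq blk_upd; last lia.
      rewrite seg_upd; last lia.
      rewrite /blk ?ea -?catA /=.
      rewrite (Ecomm_yx (i:=a) (j:=a.+1)); [|done|done|lia].
      case: (eps a.+1) => /=; last exact: E_refl.
      rewrite Ezz //; exact: E_refl.
-
  case: (ltnP j.+1 k) => hjk.
    apply: (CL_move (h0 := [:: gy j]) (tl := [::]) (c := Some (k, eps))) => //; first lia.
      rewrite /= /good Sz /= andbT; apply/andP; split=> //; apply/eqP; lia.
    by rewrite cats0; exact: E_refl.
  case: (ltngtP j.+1 k) => hjk'; first lia.
  + have hjn : j <= n by move: Sz => /= /andP[/andP[]].
    case: (ltngtP j k) => hjk2; first lia; last first.
    *
      subst j; rewrite (rep_rec _ hkn) -catA.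
      case ek: (eps k); rewrite /blk ek /=.
      - have /= L := tailE (eqv_braid HSv (b := k) ltac:(lia) (S_gx (j:=k) hk) (S_gy (j:=k) hk)).
        rewrite L.
        apply: (CL_move (k := k.+1) (h0 := [:: gx k]) (c := Some (k, eps))) => //.
          lia.
          by rewrite /= /good (S_gx (j := k)) //=; lia.
        rewrite /= (rep_rec _ hkn) /blk ek /=; exact: E_refl.
      - case: (ltngtP k n) => hkn2; [|lia|].
        + apply: (CL_nomove (c := Some (k.+1, eps))) => /=; first lia.
          rewrite Ezz ?cats0 //; exact: E_refl.
        + apply: (CL_nomove (c := None)) => //=; subst k.
          rewrite Ezz // rep_top; exact: E_refl.
    * (* k < j *)
      case: j hjk hjn hjk' hjk2 Sz => // a hjk hjn hjk' hka Sz.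
      have ka : k <= a by lia.
      have an : a < n by lia.
      have [Sxa Sya Sxb Syb a1] := locS (a := a) ltac:(lia) an.
      rewrite (rep_split3 _ ka an) -!catA.
      rewrite Ecomm_word //; first last.
        by apply: sub_all (seg_idx a k eps) => t /= ht; lia.
        by apply: all_S_seg; lia.
      rewrite cats0.
      case eb: (eps a.+1); rewrite /blk ?eb /=.
      -
        case ea: (eps a); rewrite /blk ?ea /=.
        + have /= L := tailE (Lf11 HSv a1 an Sxa Sxb Syb Sya); rewrite L.
          apply: (CL_move (k := a.+2) (h0 := [:: gy a; gx a.+1]) (c := Some (k, eps))) => //.
            lia.
            rewrite /= /good Sya Sxb /= !andbT; apply/andP; split; [apply/eqP; lia | lia].
          rewrite /= (rep_split3 _ ka an) /blk ?ea ?eb -?catA /=; exact: E_refl.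
        + have /= L := tailE (Lf10 HSv a1 an Sxb Syb Sya); rewrite L.
          apply: (CL_move (k := a.+2) (h0 := [:: gy a; gx a.+1]) (c := Some (k, eps))) => //.
            lia.
            rewrite /= /good Sya Sxb /= !andbT; apply/andP; split; [apply/eqP; lia | lia].
          rewrite /= (rep_split3 _ ka an) /blk ?ea ?eb -?catA /=; exact: E_refl.
      -
        case ea: (eps a); rewrite /blk ?ea /=.
        + have /= L := tailE (Lf01 HSv a1 an Sxa Syb Sya); rewrite L.
          apply: (CL_move (k := a.+2) (h0 := [:: gx a; gy a; gx a]) (c := Some (k, upd eps a (~~ eps a)))) => //.
            lia.
            rewrite /= /good Sya Sxa /= !andbT; apply/andP; split; [apply/eqP; lia | lia].
          rewrite /= (rep_split3 _ ka an) rep_upd // blk_upd; last lia.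
          rewrite blk_upd_eq seg_upd // /blk ?ea ?eb -?catA /=; exact: E_refl.
        + have /= L := tailE (Lf00 HSv a1 an Sxa Syb Sya); rewrite L.
          apply: (CL_move (k := a.+2) (h0 := [:: gx a; gy a; gx a]) (c := Some (k, upd eps a (~~ eps a)))) => //.
            lia.
            rewrite /= /good Sya Sxa /= !andbT; apply/andP; split; [apply/eqP; lia | lia].
          rewrite /= (rep_split3 _ ka an) rep_upd // blk_upd; last lia.
          rewrite blk_upd_eq seg_upd // /blk ?ea ?eb -?catA /=; exact: E_refl.
  + (* j.+1 = k *)
    have pj : p <= j by apply: S_gy_low Sz _; lia.
    have hjn : j <= n by lia.
    apply: (CL_nomove (c := Some (j, upd eps j false))) => /=; first lia.
    rewrite (rep_rec _ hjn) blk_upd_eq hjk' rep_upd; [exact: E_refl | lia].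
Qed.

Lemma closure c z : cok c -> S z -> CL (crep c ++ [:: z]).
Proof.
case: c => [[k eps]|] /= hc Sz; first exact: closure_some.
case yz: (isyn n z).
  have -> : z = gy n by move: yz; case: z {Sz} => //= j /eqP ->.
  apply: (CL_nomove (c := Some (n, fun _ => false))) => /=.
    by have hp := p_bounds; apply/andP; split; lia.
  rewrite (rep_rec _ (leqnn n)) rep_top /=; exact: E_refl.
exists [:: z], None; split; first by rewrite /= S'E Sz yz.
split=> //; exact: E_refl.
Qed.

Lemma letter_pos b z : S z -> weq n S [:: (b, z)] [:: (true, z)].
Proof.
move=> Sz; case: b; first by apply: weq_refl; rewrite /onS /= Sz.
apply: (weq_trans (v := [:: (false, z)] ++ pos [:: z; z])).
  have h0 : onS S [:: (false, z)] by rewrite /onS /= Sz.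
  have := weq_cat (weq_refl n h0) (weq_sym (eqv_zz HSv Sz)); by rewrite cats0.
rewrite /pos /= -[[:: _, _ & _]]/([:: (false, z); (true, z)] ++ [:: (true, z)]).
have h1 : onS S [:: (true, z)] by rewrite /onS /= Sz.
by have := weq_cat (weq_cancel n false Sz) (weq_refl n h1).
Qed.

Lemma S'S z : S' z -> S z.
Proof. by rewrite S'E => /andP[]. Qed.

Lemma coset_invariant w : onS S w -> exists h c, all S' h /\ cok c /\ weq n S w (pos (h ++ crep c)).
Proof.
elim/last_ind: w => [|w [b z] IH].
  by move=> _; exists [::], None; split=> //; split=> //; apply: weq_refl.
rewrite /onS all_rcons /= => /andP[Sz Sw].
have [h [c [Sh [hc He]]]] := IH Sw.
have [h' [c' [Sh' [hc' He']]]] := closure hc Sz.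
exists (h ++ h'), c'; split; first by rewrite all_cat Sh Sh'.
split=> //.
have Sc : all S (crep c) by case: c hc {He He'} => [[k e]|] //= hk; apply: all_S_rep; case/andP: hk.
have Sh0 : all S h by apply: sub_all Sh => t; exact: S'S.
rewrite -cats1.
apply: (weq_trans (v := pos (h ++ crep c) ++ pos [:: z])).
  apply: weq_cat => //; exact: letter_pos.
rewrite -map_cat -catA -catA; apply: (eqv_cat (u1 := h)); first exact: eqv_refl.
case: He' => _; apply; by rewrite all_cat Sc /= Sz.
Qed.

Lemma cancel_pos c : all S c -> weq n S (pos c ++ winv (pos c)) [::].
Proof.
elim: c => [|z c IH] /=; first by move=> _; apply: weq_refl.
case/andP=> Sz Sc.
have -> : winv (pos (z :: c)) = winv (pos c) ++ [:: (false, z)].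
  by rewrite /winv /pos /= rev_cons cats1.
suff h : weq n S ([:: (true, z)] ++ (pos c ++ winv (pos c)) ++ [:: (false, z)]) [::].
  by move: h; rewrite /= -catA.
apply: (weq_trans (v := [:: (true, z)] ++ [::] ++ [:: (false, z)])).
  apply: weq_cat; first by apply: weq_refl; rewrite /onS /= Sz.
  by apply: weq_cat; [exact: IH | apply: weq_refl; rewrite /onS /= Sz].
exact: (weq_cancel n true Sz).
Qed.
End Main.

Theorem proposition4 (n : nat) (lam mu : seq nat) :
  1 <= n ->
  decomposition n.+1 lam ->
  decomposition n.+1 mu ->
  1 < last 0 mu ->
  last 0 mu <= last 0 lam ->
  (* every right coset H w (w in G) is H or one of the listed cosets *)
  (forall w : word, onS (Sset n lam mu) w ->
     inH n (Sset n lam mu) (Sset n lam (mu_prime mu)) w \/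
     exists (k : nat) (eps : nat -> bool),
       n + 2 - last 0 mu <= k <= n /\
       inH n (Sset n lam mu) (Sset n lam (mu_prime mu))
           (w ++ winv (pos (rep n k eps)))) /\
  (* and each listed representative is an element of G *)
  (forall (k : nat) (eps : nat -> bool),
     n + 2 - last 0 mu <= k <= n -> all (Sset n lam mu) (rep n k eps)).
Proof.
move=> hn hlam hmu hlast hll; split; last first.
  by move=> k eps /andP[hk _]; exact: (all_S_rep hn hlam hmu hlast hll eps hk).
move=> w Sw; have [h [c [Sh [hc He]]]] := coset_invariant hn hlam hmu hlast hll Sw.
have ShS : all (Sset n lam mu) h by apply: sub_all Sh => t; exact: (S'S hn hlam hmu hlast hll).
case: c hc He => [[k eps]|] /= hc He; last first.
  left; exists (pos h); split; first by rewrite onS_pos.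
  by apply: weq_sym; rewrite cats0 in He.
right; exists k, eps; split=> //; exists (pos h); split; first by rewrite onS_pos.
have Sc : all (Sset n lam mu) (rep n k eps) by case/andP: hc => hk _; exact: (all_S_rep hn hlam hmu hlast hll eps hk).
apply: weq_sym; apply: (weq_trans (v := pos (h ++ rep n k eps) ++ winv (pos (rep n k eps)))).
  apply: weq_cat => //; apply: weq_refl.
  by rewrite /onS /winv all_rev all_map /pos all_map; apply: sub_all Sc => t /=.
rewrite /pos map_cat -catA -{2}(cats0 (map (pair true) h)); apply: weq_cat.
  by apply: weq_refl; rewrite onS_pos.
exact: cancel_pos.
Qed.
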